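(* Let $\Gamma$ be a Deza graph with parameters $(n,k,k-1,a)$, $k>1$, $\beta=1$. Let $x,y$ be two $A$-vertices with $\{x,x_b\}\ne\{y,y_b\}$. Then either all possible edges between $\{x,x_b\}$ and $\{y,y_b\}$ are present in $\Gamma$, or there are no such edges.
   Context: A Deza graph with parameters $(n,k,b,a)$, $a\le b$, is a $k$-regular graph on $n$ vertices in which any two distinct vertices have $a$ or $b$ common neighbours; $\beta$ is the number of vertices $u\ne v$ with exactly $b$ common neighbours with a given vertex $v$ (independent of $v$). Since $\beta=1$, for each vertex $x$ let $x_b$ denote the unique vertex having $b=k-1$ common neighbours with $x$. A vertex $x$ is an $A$-vertex if $x$ is adjacent to $x_b$, and an $NA$-vertex otherwise. *)

(* Defs.v *)
From mathcomp Require Import all_boot.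
Set Implicit Arguments. Unset Strict Implicit. Unset Printing Implicit Defensive.

Definition simple_graph (T : finType) (e : rel T) : Prop :=
  symmetric e /\ irreflexive e.

Definition cn (T : finType) (e : rel T) (x y : T) : nat :=
  #|[set z | e x z && e y z]|.

Definition regular (T : finType) (e : rel T) (k : nat) : Prop :=
  forall x : T, #|[set z | e x z]| = k.

Definition deza_graph (T : finType) (e : rel T) (n k b a : nat) : Prop :=
  [/\ simple_graph e, #|T| = n, regular e k, a <= b &
      forall x y : T, x != y -> cn e x y = a \/ cn e x y = b].

Definition deza_beta (T : finType) (e : rel T) (b beta : nat) : Prop :=
  forall v : T, #|[set u | (u != v) && (cn e v u == b)]| = beta.

(* Main.v *)
Require Import Defs.
From mathcomp Require Import all_boot.
Set Implicit Arguments. Unset Strict Implicit.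

Lemma pairL (T : finType) (e : rel T) (k : nat) (x xb : T) :
  symmetric e -> irreflexive e -> regular e k ->
  e x xb -> cn e x xb = k.-1 ->
  [set z | e x z && e xb z] = [set z | e x z] :\ xb.
Proof.
move=> sym irr reg exb hc.
apply/eqP; rewrite eqEcard; apply/andP; split.
  apply/subsetP=> z; rewrite !inE => /andP[h1 h2]; rewrite h1 andbT.
  by apply/eqP=> Ez; subst z; rewrite irr in h2.
have := cardsD1 xb [set z | e x z]; rewrite inE exb reg add1n => hk.
rewrite /cn in hc; rewrite hc hk /=; done.
Qed.

Lemma pair_same (T : finType) (e : rel T) (k : nat) (x xb : T) :
  symmetric e -> irreflexive e -> regular e k ->
  e x xb -> cn e x xb = k.-1 ->
  forall z, z != x -> z != xb -> e x z = e xb z.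
Proof.
move=> sym irr reg exb hc z zx zxb.
have h1 := pairL sym irr reg exb hc.
have exb' : e xb x by rewrite sym.
have hc' : cn e xb x = k.-1.
  by rewrite -hc /cn; apply: eq_card => w; rewrite !inE andbC.
have h2 := pairL sym irr reg exb' hc'.
have : z \in [set z | e x z && e xb z] = (z \in [set z | e xb z && e x z]).
  by rewrite !inE andbC.
by rewrite h1 h2 !inE zx zxb.
Qed.

Lemma beta_uniq (T : finType) (e : rel T) (b : nat) v u w :
  deza_beta e b 1 -> u != v -> cn e v u = b -> w != v -> cn e v w = b -> u = w.
Proof.
move=> hb uv hu wv hw.
have [c hc] := cards1P (introT eqP (hb v)).
have : u \in [set u | (u != v) && (cn e v u == b)] by rewrite inE uv hu eqxx.
have : w \in [set u | (u != v) && (cn e v u == b)] by rewrite inE wv hw eqxx.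
by rewrite hc !inE => /eqP -> /eqP ->.
Qed.

Theorem lemma3 (T : finType) (e : rel T) (n k a : nat) (x xb y yb : T) :
  deza_graph e n k k.-1 a -> 1 < k -> deza_beta e k.-1 1 ->
  xb != x -> cn e x xb = k.-1 ->
  yb != y -> cn e y yb = k.-1 ->
  e x xb -> e y yb ->
  [set x; xb] != [set y; yb] ->
  (e x y && e x yb && e xb y && e xb yb) \/
  (~~ e x y && ~~ e x yb && ~~ e xb y && ~~ e xb yb).
Proof.
move=> [[sym irr] _ reg _ _] k1 hb xbx hx yby hy exx eyy hne.
have cnS : forall u v, cn e u v = cn e v u.
  by move=> u v; rewrite /cn; apply: eq_card => w; rewrite !inE andbC.
have hxb : cn e xb x = k.-1 by rewrite cnS.
have hyb : cn e yb y = k.-1 by rewrite cnS.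
have xxb : x != xb by rewrite eq_sym.
have yx : y != x.
  apply/eqP=> E; subst y.
  by move: hne; rewrite (beta_uniq hb xbx hx yby hy) eqxx.
have yxb : y != xb.
  apply/eqP=> E; subst y.
  have E := beta_uniq hb xxb hxb yby hy.
  by move: hne; rewrite -E setUC eqxx.
have ybx : yb != x.
  apply/eqP=> E; subst yb.
  have E : xb = y by apply: (beta_uniq hb xbx hx yx); rewrite cnS.
  by move: hne; rewrite E setUC eqxx.
have ybxb : yb != xb.
  apply/eqP=> E; subst yb.
  have E : x = y by apply: (beta_uniq hb xxb hxb yxb); rewrite cnS.
  by move: hne; rewrite E eqxx.
have e1 := pair_same sym irr reg exx hx yx yxb.
have e2 := pair_same sym irr reg exx hx ybx ybxb.
have e3 := pair_same sym irr reg eyy hy (x:=y) (z:=x); rewrite eq_sym yx eq_sym ybx in e3.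
have e3' := e3 erefl erefl.
have e4 := pair_same sym irr reg eyy hy (x:=y) (z:=xb); rewrite eq_sym yxb eq_sym ybxb in e4.
have e4' := e4 erefl erefl.
rewrite -e1 -e2 (sym x yb) -e3' (sym y x).
by case: (e x y); [left|right].
Qed.
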